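(* Let $I\subseteq\mathbb{R}_+$ be a nonempty interval containing $0$ and let $f\colon I^n\to\mathbb{R}$. The following are equivalent: (i) $f$ is comonotonically modular; (ii) $f$ is invariant under horizontal min-differences; (iii) there exists $g\colon I^n\to\mathbb{R}$ such that for every $\sigma\in S_n$ and every $\mathbf{x}\in I^n_\sigma$, $$f(\mathbf{x})=g(\mathbf{0})+\sum_{i\in[n]}\Big(g\big(x_{\sigma(i)}\mathbf{1}_{A^\uparrow_\sigma(i)}\big)-g\big(x_{\sigma(i)}\mathbf{1}_{A^\uparrow_\sigma(i+1)}\big)\Big).$$ Moreover, in this case one can take $g=f$ in (iii).
   Context: Notation: $[n]=\{1,\ldots,n\}$; $S_n$ is the set of permutations of $[n]$; $\mathbf{1}_A$ is the indicator tuple of $A\subseteq[n]$, $\mathbf{0}=\mathbf{1}_\varnothing$. For $\sigma\in S_n$, $\mathbb{R}^n_\sigma=\{\mathbf{x}: x_{\sigma(1)}\leq\cdots\leq x_{\sigma(n)}\}$, $I^n_\sigma=I^n\cap\mathbb{R}^n_\sigma$, $A^\uparrow_\sigma(i)=\{\sigma(i),\ldots,\sigma(n)\}$, $A^\uparrow_\sigma(n+1)=\varnothing$. $\wedge,\vee$ denote componentwise min and max; $\mathbf{x}\wedge c$ is the tuple with components $\min(x_i,c)$. Two tuples $\mathbf{x},\mathbf{x}'\in I^n$ are comonotonic if $\mathbf{x},\mathbf{x}'\in I^n_\sigma$ for some $\sigma\in S_n$. A function $f\colon I^n\to\mathbb{R}$ is comonotonically modular if $f(\mathbf{x})+f(\mathbf{x}')=f(\mathbf{x}\wedge\mathbf{x}')+f(\mathbf{x}\vee\mathbf{x}')$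 for all comonotonic $\mathbf{x},\mathbf{x}'\in I^n$. For $c\geq 0$, $[\mathbf{x}]_c$ is the tuple whose $i$th component is $0$ if $x_i\leq c$ and $x_i$ otherwise. For $I\subseteq\mathbb{R}_+$, $f$ is invariant under horizontal min-differences if $f(\mathbf{x})-f(\mathbf{x}\wedge c)=f([\mathbf{x}]_c)-f([\mathbf{x}]_c\wedge c)$ for all $\mathbf{x}\in I^n$, $c\in I$. *)

(* Defs.v *)
From HB Require Import structures.
From mathcomp Require Import all_boot all_order all_algebra all_fingroup.
Set Implicit Arguments. Unset Strict Implicit. Unset Printing Implicit Defensive.
Import Order.TTheory GRing.Theory Num.Theory.
Local Open Scope ring_scope.

Section Defs.
Variables (R : realFieldType) (n : nat).

(* n-tuples are finite functions 'I_n -> R; index i : 'I_n stands for i+1 in [n]. *)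
Definition tup := {ffun 'I_n -> R}.

Definition in_cube (I : pred R) (x : tup) : Prop := forall i, x i \in I.

Definition ordered_by (s : 'S_n) (x : tup) : Prop :=
  forall i j : 'I_n, (i <= j)%N -> x (s i) <= x (s j).

Definition tmeet (x y : tup) : tup := [ffun i => Num.min (x i) (y i)].
Definition tjoin (x y : tup) : tup := [ffun i => Num.max (x i) (y i)].
Definition tmin_c (x : tup) (c : R) : tup := [ffun i => Num.min (x i) c].
Definition tcut (x : tup) (c : R) : tup := [ffun i => if x i <= c then 0 else x i].
Definition tind (c : R) (A : {set 'I_n}) : tup := [ffun i => if i \in A then c else 0].
Definition tzero : tup := [ffun _ => 0].

(* A^up_sigma(k+1) = {sigma(k+1),...,sigma(n)} (0-indexed: k = 0..n, A(n) = empty) *)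
Definition Aup (s : 'S_n) (k : nat) : {set 'I_n} := [set s j | j : 'I_n & (k <= j)%N].

Definition comonotonic (I : pred R) (x x' : tup) : Prop :=
  exists s : 'S_n, [/\ in_cube I x, in_cube I x', ordered_by s x & ordered_by s x'].

Definition comonotonically_modular (I : pred R) (f : tup -> R) : Prop :=
  forall x x' : tup, in_cube I x -> in_cube I x' -> comonotonic I x x' ->
    f x + f x' = f (tmeet x x') + f (tjoin x x').

Definition inv_horiz_min_diff (I : pred R) (f : tup -> R) : Prop :=
  forall (x : tup) (c : R), in_cube I x -> c \in I ->
    f x - f (tmin_c x c) = f (tcut x c) - f (tmin_c (tcut x c) c).

Definition represented_by (I : pred R) (f g : tup -> R) : Prop :=
  forall (s : 'S_n) (x : tup), in_cube I x -> ordered_by s x ->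
    f x = g tzero + \sum_(k < n) (g (tind (x (s k)) (Aup s k))
                                  - g (tind (x (s k)) (Aup s k.+1))).

Definition is_interval0 (I : pred R) : Prop :=
  [/\ 0 \in I, (forall x, x \in I -> 0 <= x) &
      (forall x y z, x \in I -> z \in I -> x <= y -> y <= z -> y \in I)].

End Defs.

(* Main.v *)
Require Import Defs.
From HB Require Import structures.
From mathcomp Require Import all_boot all_order all_algebra all_fingroup.
From Stdlib Require Import Lia.
Import Order.TTheory GRing.Theory Num.Theory.
Local Open Scope ring_scope.
Set Implicit Arguments. Unset Strict Implicit. Unset Printing Implicit Defensive.

Section Aux.
Variables (R : realFieldType) (n : nat) (I : pred R).
Hypothesis hI : is_interval0 I.

Lemma I0 : 0 \in I. Proof. by case: hI. Qed.
Lemma Ipos x : x \in I -> 0 <= x. Proof. by case: hI => _ h _; apply: h. Qed.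

Lemma memAup (s : 'S_n) k i : (i \in Aup s k) = (k <= s^-1%g i)%N.
Proof.
apply/imsetP/idP => [[j]|h].
  by rewrite inE => hj ->; rewrite permK.
by exists (s^-1%g i); rewrite ?inE ?permKV.
Qed.

Lemma ordered_min (s : 'S_n) (x : {ffun 'I_n -> R}) c :
  ordered_by s x -> ordered_by s (tmin_c x c).
Proof.
move=> hx i j hij; rewrite !ffunE le_min !ge_min lexx orbT andbT.
by rewrite (hx _ _ hij).
Qed.

Lemma cube_min (x : {ffun 'I_n -> R}) c :
  in_cube I x -> c \in I -> in_cube I (tmin_c x c).
Proof. by move=> hx hc i; rewrite ffunE; case: leP => _. Qed.

Lemma cube_cut (x : {ffun 'I_n -> R}) c :
  in_cube I x -> in_cube I (tcut x c).
Proof. by move=> hx i; rewrite ffunE; case: ifP => _; rewrite ?I0. Qed.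

Lemma cube_tind c A : c \in I -> in_cube I (tind (n:=n) c A).
Proof. by move=> hc i; rewrite ffunE; case: ifP => _; rewrite ?I0. Qed.

Lemma ordered_tind (s : 'S_n) (c : R) k : 0 <= c -> ordered_by s (tind c (Aup s k)).
Proof.
move=> hc i j hij; rewrite !ffunE !memAup !permK.
case: ifP => hi; case: ifP => hj //.
by move: hj; rewrite (leq_trans hi hij).
Qed.

Lemma exists_sort (x : {ffun 'I_n -> R}) : exists s : 'S_n, ordered_by s x.
Proof.
set t := [tuple x i | i < n].
have hp : perm_eq (sort <=%R t) t by rewrite perm_sort.
case/tuple_permP: hp => p hp; exists p => i j hij.
have hs : sorted <=%R (sort <=%R t) by apply: sort_sorted; exact: le_total.
have := sorted_leq_nth le_trans lexx 0 hs.
rewrite hp => H; have := H i j; rewrite !inE size_tuple !ltn_ord => /(_ isT isT hij).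
by rewrite -!tnth_nth !tnth_map !tnth_ord_tuple.
Qed.

Lemma rep_modular (f g : {ffun 'I_n -> R} -> R) : represented_by I f g -> comonotonically_modular I f.
Proof.
move=> hr x x' hx hx' [s [_ _ ox ox']].
have omeet : ordered_by s (tmeet x x').
  by move=> i j hij; rewrite !ffunE le_min !ge_min (ox _ _ hij) (ox' _ _ hij) /= orbT.
have ojoin : ordered_by s (tjoin x x').
  by move=> i j hij; rewrite !ffunE ge_max !le_max (ox _ _ hij) (ox' _ _ hij) /= orbT.
have cmeet : in_cube I (tmeet x x') by move=> i; rewrite ffunE; case: leP.
have cjoin : in_cube I (tjoin x x') by move=> i; rewrite ffunE; case: leP.
rewrite (hr s x) // (hr s x') // (hr s _ cmeet omeet) (hr s _ cjoin ojoin).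
rewrite addrACA [RHS]addrACA -!big_split; congr (_ + _).
apply: eq_bigr => k _; rewrite !ffunE.
have [h|h] := boolP (x (s k) <= x' (s k)); first by rewrite (min_l h) (max_r h).
rewrite -ltNge in h; rewrite (min_r (ltW h)) (max_l (ltW h)) /=; exact: addrC.
Qed.

Lemma rep_horiz (f g : {ffun 'I_n -> R} -> R) : represented_by I f g -> inv_horiz_min_diff I f.
Proof.
move=> hr x c hx hc; have [s ox] := exists_sort x.
have c0 := Ipos hc.
have oy : ordered_by s (tcut x c).
  move=> i j hij; rewrite !ffunE.
  case: ifP => hi; case: ifP => hj //; first exact/Ipos/hx.
    by move: hi; rewrite (le_trans (ox _ _ hij) hj).
  exact: ox.
have o1 := ordered_min c ox.
have o2 := ordered_min c oy.
have k1 := cube_min hx hc.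
have k2 := cube_cut c hx.
have k3 := cube_min k2 hc.
rewrite (hr s x) // (hr s _ k1 o1) (hr s _ k2 oy) (hr s _ k3 o2).
rewrite !opprD addrACA subrr add0r addrACA subrr add0r -!sumrB; apply: eq_bigr => k _.
rewrite !ffunE; case: ifP => h //.
by rewrite (min_l h) (min_l c0) !subrr.
Qed.

Lemma modular_rep (f : {ffun 'I_n -> R} -> R) : comonotonically_modular I f -> represented_by I f f.
Proof.
move=> hm s x hx ox.
pose p k := [ffun i => if (k <= s^-1%g i)%N then x i else 0] : {ffun 'I_n -> R}.
have cp k : in_cube I (p k) by move=> i; rewrite ffunE; case: ifP; rewrite ?I0.
have op k : ordered_by s (p k).
  move=> i j hij; rewrite !ffunE !permK.
  case: ifP => hi; case: ifP => hj //; first exact: ox.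
    by move: hj; rewrite (leq_trans hi hij).
  exact/Ipos/hx.
have step (k : 'I_n) : f (p k) - f (p k.+1) =
    f (tind (x (s k)) (Aup s k)) - f (tind (x (s k)) (Aup s k.+1)).
  set c := x (s k).
  have c0 : 0 <= c := Ipos (hx _).
  have hc : c \in I := hx _.
  have := hm (p k.+1) (tind c (Aup s k)) (cp _) (cube_tind _ hc).
  have -> : tmeet (p k.+1) (tind c (Aup s k)) = tind c (Aup s k.+1).
    apply/ffunP => i; rewrite !ffunE !memAup.
    case: (ltngtP k (s^-1%g i)) => h.
    - by rewrite min_r // /c -[i](permKV s); exact: ox (ltnW h).
    - by rewrite minxx.
    - by rewrite min_l.
  have -> : tjoin (p k.+1) (tind c (Aup s k)) = p k.
    apply/ffunP => i; rewrite !ffunE !memAup.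
    case: (ltngtP k (s^-1%g i)) => h.
    - by rewrite max_l // /c -[i](permKV s); exact: ox (ltnW h).
    - by rewrite maxxx.
    - by rewrite max_r // /c (_ : k = s^-1%g i) ?permKV //; apply: val_inj.
  move=> e; have {}e := e (ex_intro _ s (And4 (cp _) (cube_tind _ hc) (op _) (ordered_tind _ _ c0))).
  have -> : f (p k) = f (p k.+1) + f (tind c (Aup s k)) - f (tind c (Aup s k.+1)).
    by rewrite e addrAC subrr add0r.
  by rewrite addrAC [f (p k.+1) + _]addrC addrK.
have p0 : p 0%N = x by apply/ffunP => i; rewrite ffunE.
have pn : p n = tzero R n.
  by apply/ffunP => i; rewrite !ffunE leqNgt ltn_ord.
transitivity (f (p 0%N)); first by rewrite p0.
rewrite -(eq_bigr _ (fun k _ => step k)).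
have := telescope_sumr (fun k => f (p k)) (leq0n n).
rewrite big_mkord pn => e.
rewrite -[\sum_(i < n) _]opprK -sumrN.
under eq_bigr do rewrite opprB.
by rewrite e opprB addrC subrK.
Qed.

End Aux.

Lemma split_mono (P : nat -> bool) N k :
  (forall i j, (i <= j)%N -> (j < N)%N -> P i -> P j) -> (k < N)%N -> ~~ P k ->
  exists m, [/\ (k < m)%N, (m <= N)%N &
    forall j, (k <= j)%N -> (j < N)%N -> P j = (m <= j)%N].
Proof.
elim: N => [|N IH] mono hk hP //.
case: (ltnP k N) => hkN.
  have mono' : forall i j, (i <= j)%N -> (j < N)%N -> P i -> P j.
    by move=> i j hij hj; apply: mono => //; apply: ltnW.
  have [m [km mN hm]] := IH mono' hkN hP.
  case hPN: (P N).
    exists m; split => //; first by apply: (leq_trans mN).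

    move=> j kj; rewrite ltnS leq_eqVlt => /orP[/eqP ->|jN]; last exact: hm.
    by rewrite hPN mN.
  exists N.+1; split => //.

  move=> j kj jN; rewrite leqNgt jN /=.
  apply/negP => Pj; move: hPN; rewrite (mono j N) //.
exists N.+1; split => //.
move=> j kj jN; have ej : j = k by apply/eqP; rewrite eqn_leq kj (leq_trans _ hkN).
by rewrite ej (negbTE hP) leqNgt hk.
Qed.

Lemma arith4 (R : realFieldType) (a b c d : R) : a + b - c + d = a + (d - c + b).
Proof. by rewrite -!addrA; congr (_ + _); rewrite addrCA [RHS]addrCA [b + d]addrC. Qed.

Lemma horiz_rep (R : realFieldType) (n : nat) (I : pred R) (hI : is_interval0 I)
  (f : {ffun 'I_n -> R} -> R) : inv_horiz_min_diff I f -> represented_by I f f.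
Proof.
move=> hh s x hx ox.
case: n f hh s x hx ox => [|n] f hh s x hx ox.
  rewrite big_ord0 addr0; congr f; apply/ffunP => -[m hm] //.
pose p k := [ffun i => if (k <= s^-1%g i)%N then x i else 0] : {ffun 'I_n.+1 -> R}.
pose y j := x (s (inord j)).
pose D j c := f (tind c (Aup s j)) - f (tind c (Aup s j.+1)).
have yE (i : 'I_n.+1) : y i = x (s i) by rewrite /y inord_val.
have ymono i j : (i <= j)%N -> (j < n.+1)%N -> y i <= y j.
  move=> hij hj; apply: ox; rewrite !inordK //; exact: leq_ltn_trans hj.
have cp k : in_cube I (p k) by move=> i; rewrite ffunE; case: ifP; rewrite ?(I0 hI).
have pN : f (p n.+1) = f (tzero R n.+1) + \sum_(n.+1 <= j < n.+1) D j (y j).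
  rewrite big_geq // addr0; congr f; apply/ffunP => i.
  by rewrite !ffunE leqNgt ltn_ord.
suff H : forall d k, (n.+1 - k <= d)%N -> (k <= n.+1)%N ->
    f (p k) = f (tzero R n.+1) + \sum_(k <= j < n.+1) D j (y j).
  have p0 : p 0%N = x by apply/ffunP => i; rewrite ffunE.
  transitivity (f (p 0%N)); first by rewrite p0.
  rewrite (H n.+1 0%N) ?subn0 // big_mkord; congr (_ + _).
  by apply: eq_bigr => i _; rewrite /D yE.
elim=> [|d IH] k hd hk.
  have -> : k = n.+1 by apply/eqP; rewrite eqn_leq hk -subn_eq0 -leqn0.
  exact: pN.
case: (ltnP k n.+1) => hkn; last first.
  by have -> : k = n.+1 by apply/eqP; rewrite eqn_leq hk hkn.
set c := y k.
have hc : c \in I by rewrite /c -[k]/(nat_of_ord (Ordinal hkn)) yE.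
have c0 : 0 <= c := Ipos hI hc.
have nk : ~~ (c < y k) by rewrite /c ltxx.
have [m [km mN hm]] := split_mono (P := fun j => c < y j)
  (fun i j hij hj h => lt_le_trans h (ymono i j hij hj)) hkn nk.
have ea : tmin_c (p k) c = tind c (Aup s k).
  apply/ffunP => i; rewrite !ffunE memAup; case: ifP => h; last exact: min_l.
  rewrite min_r // -[i](permKV s) -yE; exact: ymono h (ltn_ord _).
have eb : tcut (p k) c = p m.
  apply/ffunP => i; rewrite !ffunE; have [h|h] := boolP (k <= s^-1%g i)%N.
    have hx' : y (s^-1%g i) = x i by rewrite yE permKV.
    rewrite -(hm _ h (ltn_ord _)) hx' leNgt; by case: (c < x i).
  have -> : (m <= s^-1%g i)%N = false.
    apply/negbTE; rewrite -ltnNge; apply: (@ltn_trans k) => //; by rewrite ltnNge.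
  by rewrite c0.
have ec : tmin_c (p m) c = tind c (Aup s m).
  apply/ffunP => i; rewrite !ffunE memAup; case: ifP => h; last exact: min_l.
  rewrite min_r // ltW //.
  have := hm _ (leq_trans (ltnW km) h) (ltn_ord (s^-1%g i)).
  by rewrite h yE permKV.
have e := hh (p k) c (cp k) hc; rewrite ea eb ec in e.
have hdm : (n.+1 - m <= d)%N.
  apply: leq_trans (leq_sub2l _ km) _; rewrite subnS; move: hd; by case: (n.+1 - k)%N.
rewrite (big_cat_nat (ltnW km) mN) /=.
have et : \sum_(k <= j < m) D j (y j) =
    f (tind c (Aup s k)) - f (tind c (Aup s m)).
  rewrite (telescope_sumr_eq (fun j => - f (tind c (Aup s j))) _ (ltnW km)).
    by rewrite opprK addrC.
  move=> j /andP[kj jm].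
  have jn : (j < n.+1)%N by exact: leq_trans jm mN.
  have -> : y j = c.
    by apply/le_anti; rewrite (ymono k j kj jn) andbT leNgt (hm j kj jn) -ltnNge.
  by rewrite /D opprK addrC.
rewrite et.
have -> : f (p k) = f (p m) - f (tind c (Aup s m)) + f (tind c (Aup s k)).
  by rewrite -e subrK.
by rewrite (IH m hdm mN) arith4.
Qed.

Theorem theorem9 (R : realFieldType) (n : nat) (I : pred R)
  (hI : is_interval0 I) (f : {ffun 'I_n -> R} -> R) :
  (comonotonically_modular I f <-> inv_horiz_min_diff I f) /\
  (comonotonically_modular I f <-> exists g : {ffun 'I_n -> R} -> R, represented_by I f g) /\
  (comonotonically_modular I f -> represented_by I f f).
Proof.
split; [|split].
- split=> h; first exact: (rep_horiz hI (modular_rep hI h)).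
  exact: (rep_modular (horiz_rep hI h)).
- split=> [h|[g hg]]; first by exists f; exact: modular_rep.
  exact: rep_modular hg.
- exact: modular_rep.
Qed.
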